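(* Let $\mathbf{L}$ be a Euclidean modal logic. Then $\mathtt{Fr}(\mathbf{L})$ is stable.
   Context: A frame is a pair $(W,R)$ with $W$ non-empty and $R\subseteq W\times W$. Modal formulas (propositional variables, $\bot,\neg,\vee,\Box$) have standard Kripke semantics; validity in a frame means truth at all points under all valuations. A (normal) modal logic contains all tautologies and K axioms and is closed under uniform substitution, modus ponens and necessitation; a Euclidean modal logic is one not containing $\bot$ and containing $\Diamond\psi\to\Box\Diamond\psi$ for all $\psi$. $\mathtt{Fr}(\mathbf{L})$ is the class of frames validating $\mathbf{L}$. First-order formulas use one binary relation symbol $\mathbf{R}$ and equality. For frames, $(W',R')\preceq(W,R)$ means every modal formula valid in $(W',R')$ is valid in $(W,R)$. Given a first-order formula $A(\mathbf{x}_1,\dots,\mathbf{x}_m,\mathbf{y})$ and $s_1,\dots,s_m\in W$ such that $T=\{t\in W:(W,R)\models A[s_1,\dots,s_m,t]\}$ is non-empty, the relativized reduct of $(W,R)$ with respect to $A$ and $s_1,\dots,s_m$ is the restriction $(T,R\cap(T\times T))$. A class $\mathcal{C}$ of frames is stable if there exist a first-order formula $A(\mathbf{x}_1,\dots,\mathbf{x}_m,\mathbf{y})$ and a sentence $B$ such that: (1) for every frame $(W',R')\in\mathcal{C}$ and all $s'_1,\dots,s'_m\in W'$, the relativized reduct of $(W',R')$ with respect to $A$ and $s'_1,\dots,s'_m$ (when it exists) is in $\mathcal{C}$; (2) for every frame $(W_0,R_0)\in\mathcal{C}$ there exist frames $(W',R'),(W'',R'')\in\mathcal{C}$ and $s'_1,\dots,s'_m\in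 W'$ such that $(W_0,R_0)$ is the relativized reduct of $(W',R')$ with respect to $A$ and $s'_1,\dots,s'_m$, $(W',R')\models B$, $(W'',R'')\not\models B$, and $(W',R')\preceq(W'',R'')$. *)

(* Defs.v *)
From Stdlib Require Import Arith.

Record frame : Type := Frame {
  world : Type;
  rel : world -> world -> Prop;
  world_inh : inhabited world }.

Definition frame_class := frame -> Prop.

Inductive mform : Type :=
| MVar : nat -> mform
| MBot : mform
| MNeg : mform -> mform
| MOr  : mform -> mform -> mform
| MBox : mform -> mform.

Definition MImp (a b : mform) : mform := MOr (MNeg a) b.
Definition MDia (a : mform) : mform := MNeg (MBox (MNeg a)).

Fixpoint forces (F : frame) (V : nat -> world F -> Prop) (w : world F)
  (phi : mform) : Prop :=
  match phi with
  | MVar n => V n w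
  | MBot => False
  | MNeg a => ~ forces F V w a
  | MOr a b => forces F V w a \/ forces F V w b
  | MBox a => forall v, rel F w v -> forces F V v a
  end.

Definition mvalid (F : frame) (phi : mform) : Prop :=
  forall (V : nat -> world F -> Prop) (w : world F), forces F V w phi.

Fixpoint msubst (s : nat -> mform) (phi : mform) : mform :=
  match phi with
  | MVar n => s n
  | MBot => MBot
  | MNeg a => MNeg (msubst s a)
  | MOr a b => MOr (msubst s a) (msubst s b)
  | MBox a => MBox (msubst s a)
  end.

(** tautologies: true under every Boolean assignment to the propositional
    atoms, where variables and boxed formulas count as atoms
    (= substitution instances of propositional tautologies) *)
Fixpoint peval (v : mform -> bool) (phi : mform) : bool :=
  match phi with
  | MVar n => v (MVar n)
  | MBot => false
  | MNeg a => negb (peval v a)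
  | MOr a b => orb (peval v a) (peval v b)
  | MBox a => v (MBox a)
  end.

Definition tautology (phi : mform) : Prop := forall v, peval v phi = true.

Definition normal_modal_logic (L : mform -> Prop) : Prop :=
  (forall phi, tautology phi -> L phi) /\
  L (MImp (MBox (MImp (MVar 0) (MVar 1)))
          (MImp (MBox (MVar 0)) (MBox (MVar 1)))) /\
  (forall s phi, L phi -> L (msubst s phi)) /\
  (forall phi psi, L (MImp phi psi) -> L phi -> L psi) /\
  (forall phi, L phi -> L (MBox phi)).

Definition euclidean_logic (L : mform -> Prop) : Prop :=
  normal_modal_logic L /\ ~ L MBot /\
  (forall psi, L (MImp (MDia psi) (MBox (MDia psi)))).

Definition Fr (L : mform -> Prop) : frame_class :=
  fun F => forall phi, L phi -> mvalid F phi.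

Definition frame_preceq (F1 F2 : frame) : Prop :=
  forall phi, mvalid F1 phi -> mvalid F2 phi.

Inductive fform : Type :=
| FRel : nat -> nat -> fform
| FEq  : nat -> nat -> fform
| FBot : fform
| FNeg : fform -> fform
| FOr  : fform -> fform -> fform
| FEx  : nat -> fform -> fform.

Definition env_upd {W : Type} (e : nat -> W) (x : nat) (d : W) : nat -> W :=
  fun y => if Nat.eqb y x then d else e y.

Fixpoint fsat (F : frame) (e : nat -> world F) (A : fform) : Prop :=
  match A with
  | FRel x y => rel F (e x) (e y)
  | FEq x y => e x = e y
  | FBot => False
  | FNeg a => ~ fsat F e a
  | FOr a b => fsat F e a \/ fsat F e b
  | FEx x a => exists d, fsat F (env_upd e x d) a
  end.

Fixpoint free_in (z : nat) (A : fform) : Prop :=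
  match A with
  | FRel x y => z = x \/ z = y
  | FEq x y => z = x \/ z = y
  | FBot => False
  | FNeg a => free_in z a
  | FOr a b => free_in z a \/ free_in z b
  | FEx x a => z <> x /\ free_in z a
  end.

(** A(x_1,...,x_m,y): variables 0..m-1 play the role of x_1..x_m and
    variable m plays the role of y. *)
Definition fv_among (m : nat) (A : fform) : Prop :=
  forall z, free_in z A -> z <= m.

Definition sentence (B : fform) : Prop := forall z, ~ free_in z B.

Definition fmodels (F : frame) (B : fform) : Prop :=
  forall e : nat -> world F, fsat F e B.

Definition par_env {W : Type} (m : nat) (s : nat -> W) (t : W) : nat -> W :=
  fun i => if Nat.ltb i m then s i else t.

Definition reduct_dom (F : frame) (A : fform) (m : nat) (s : nat -> world F)
  (t : world F) : Prop := fsat F (par_env m s t) A.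

Definition reduct_frame (F : frame) (A : fform) (m : nat) (s : nat -> world F)
  (h : exists t, reduct_dom F A m s t) : frame :=
  {| world := { t : world F | reduct_dom F A m s t };
     rel := fun a b => rel F (proj1_sig a) (proj1_sig b);
     world_inh := match h with ex_intro _ t ht => inhabits (exist _ t ht) end |}.

Definition is_reduct_of (F0 F : frame) (A : fform) (m : nat)
  (s : nat -> world F) : Prop :=
  exists f : world F0 -> world F,
    (forall a b, f a = f b -> a = b) /\
    (forall t, reduct_dom F A m s t <-> exists a, f a = t) /\
    (forall a b, rel F0 a b <-> rel F (f a) (f b)).

Definition stable (C : frame_class) : Prop :=
  exists (m : nat) (A : fform) (B : fform),
    fv_among m A /\ sentence B /\
    (forall F', C F' -> forall (s : nat -> world F')
       (h : exists t, reduct_dom F' A m s t), C (reduct_frame F' A m s h)) /\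
    (forall F0, C F0 ->
       exists F' F'' (s : nat -> world F'),
         C F' /\ C F'' /\ is_reduct_of F0 F' A m s /\
         fmodels F' B /\ ~ fmodels F'' B /\ frame_preceq F' F'').

(* Main.v *)
Require Import Defs.
From Stdlib Require Import Classical ProofIrrelevance Lia.

Lemma pm (G F : frame) (f : world G -> world F)
  (forth : forall a b, rel G a b -> rel F (f a) (f b))
  (back : forall a v, rel F (f a) v -> exists b, rel G a b /\ f b = v)
  VG VF (HV : forall n a, VG n a <-> VF n (f a)) :
  forall phi a, forces G VG a phi <-> forces F VF (f a) phi.
Proof.
  induction phi; intro a; simpl.
  - apply HV.
  - tauto.
  - rewrite IHphi; tauto.
  - rewrite IHphi1, IHphi2; tauto.
  - split.
    + intros H v Hv. destruct (back a v Hv) as [b [Hb <-]].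
      apply IHphi; auto.
    + intros H b Hb. apply IHphi. apply H. apply forth; auto.
Qed.

Lemma eucl (L : mform -> Prop) (HL : euclidean_logic L) F :
  Fr L F -> forall x y z, rel F x y -> rel F x z -> rel F y z.
Proof.
  intros HF x y z Hxy Hxz.
  destruct HL as [_ [_ He]].
  pose proof (HF _ (He (MVar 0)) (fun _ w => w = z) x) as H.
  simpl in H. destruct H as [H|H].
  - exfalso; apply H; intro H'. apply (H' z Hxz); reflexivity.
  - specialize (H y Hxy). apply NNPP; intro Hn. apply H.
    intros w Hw ->. contradiction.
Qed.

Definition FAnd a b := FNeg (FOr (FNeg a) (FNeg b)).
Definition Aform : fform :=
  FAnd (FNeg (FEq 1 0))
   (FAnd (FNeg (FRel 1 0)) (FNeg (FEx 2 (FAnd (FRel 1 2) (FRel 2 0))))).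
Definition Bform : fform := FEx 0 (FEx 1 (FNeg (FEq 0 1))).

Lemma redA F s t : reduct_dom F Aform 1 s t <->
  (t <> s 0 /\ ~ rel F t (s 0) /\ ~ exists z, rel F t z /\ rel F z (s 0)).
Proof.
  unfold reduct_dom, Aform, FAnd, env_upd, par_env; simpl.
  cbv [env_upd]; simpl.
  split.
  - intro H. apply not_or_and in H. destruct H as [H1 H2].
    apply NNPP in H1. apply NNPP in H2.
    apply not_or_and in H2. destruct H2 as [H2 H3].
    apply NNPP in H3. apply NNPP in H2.
    split; [exact H1|]. split; [exact H2|].
    intros [z [Hz1 Hz2]]. apply H3. exists z. tauto.
  - intros [H1 [H2 H3]]. intros [H|H]; apply H; [exact H1|].
    intros [H'|H']; apply H'; [exact H2|].
    intros [z Hz]. apply H3. exists z. unfold env_upd in Hz; simpl in Hz.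
    apply not_or_and in Hz. destruct Hz as [Ha Hb].
    apply NNPP in Ha; apply NNPP in Hb. tauto.
Qed.

Definition Pframe (r : Prop) : frame :=
  {| world := unit; rel := fun _ _ => r; world_inh := inhabits tt |}.

Definition sumrel (F : frame) (r : Prop) (a b : world F + unit) : Prop :=
  match a, b with
  | inl x, inl y => rel F x y
  | inr _, inr _ => r
  | _, _ => False
  end.

Definition Sframe (F : frame) (r : Prop) : frame :=
  {| world := (world F + unit)%type; rel := sumrel F r;
     world_inh := match world_inh F with inhabits x => inhabits (inl x) end |}.

Lemma toP (F : frame) (r : Prop) (S : world F -> Prop) u0
  (Hu0 : S u0) (Hcl : forall u v, S u -> rel F u v -> S v)
  (Hser : forall u, S u -> ((exists v, rel F u v) <-> r)) :
  forall phi, mvalid F phi -> mvalid (Pframe r) phi.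
Proof.
  intros phi Hv VP w. destruct w.
  assert (K : forall phi u, S u ->
     (forces F (fun n _ => VP n tt) u phi <-> forces (Pframe r) VP tt phi)).
  { clear phi Hv. induction phi; intros u Hu; simpl.
    - tauto.
    - tauto.
    - rewrite (IHphi u Hu); tauto.
    - rewrite (IHphi1 u Hu), (IHphi2 u Hu); tauto.
    - split.
      + intros H [] Hr. destruct (proj2 (Hser u Hu) Hr) as [v Hv].
        apply (IHphi v (Hcl u v Hu Hv)). auto.
      + intros H v Hv. apply (IHphi v (Hcl u v Hu Hv)).
        apply H. apply (Hser u Hu). eauto. }
  apply (K phi u0 Hu0). apply Hv.
Qed.

Theorem lemma51 (L : mform -> Prop) (HL : euclidean_logic L) : stable (Fr L).
Proof.
  exists 1, Aform, Bform.
  split; [|split; [|split]].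
  - intros z Hz. simpl in Hz. repeat (destruct Hz as [Hz|Hz]); try lia;
      try (destruct Hz as [? Hz]); try lia;
      repeat (destruct Hz as [Hz|Hz]); subst; auto.
  - intros z Hz. simpl in Hz. destruct Hz as [H0 [H1 [H|H]]]; auto.
  - intros F' HF s h phi Hphi VG a.
    set (VF := fun n w => exists b : world (reduct_frame F' Aform 1 s h),
                  proj1_sig b = w /\ VG n b).
    apply (pm (reduct_frame F' Aform 1 s h) F' (@proj1_sig _ _)) with (VF := VF).
    + auto.
    + intros [t Ht] v Hv. simpl in Hv.
      assert (Hd : reduct_dom F' Aform 1 s v).
      { apply redA in Ht. apply redA. destruct Ht as [H1 [H2 H3]].
        pose proof (eucl L HL F' HF) as E.
        split; [|split].
        - intros ->. auto.
        - intro Hx. apply H3. eauto.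
        - intros [u [Hu1 Hu2]]. apply H3. exists v. split; auto.
          assert (Hvv : rel F' v v) by (apply (E t); auto).
          assert (Huv : rel F' u v) by (apply (E v); auto).
          apply (E u); auto. }
      exists (exist _ v Hd). simpl. auto.
    + intros n b. unfold VF. split.
      * intro H. exists b. auto.
      * intros [b' [Hb H]]. destruct b as [x px], b' as [x' px'].
        simpl in Hb. subst x'. rewrite (proof_irrelevance _ px px'). exact H.
    + apply HF; auto.
  - intros F0 HF0.
    assert (HP : exists r : Prop,
               forall phi, mvalid F0 phi -> mvalid (Pframe r) phi).
    { destruct (classic (exists u v, rel F0 u v)) as [[u [v Huv]]|Hno].
      - exists True. pose proof (eucl L HL F0 HF0) as E.
        apply (toP F0 True (fun w => rel F0 v w) v).
        + apply (E u); auto.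
        + intros w z Hw Hz. assert (Hww : rel F0 w w) by (apply (E v); auto).
          assert (Hwv : rel F0 w v) by (apply (E v); auto; apply (E u); auto).
          apply (E w); auto.
        + intros w Hw. split; auto. intros _. exists w.
          apply (E v); auto.
      - exists False. destruct (world_inh F0) as [u0].
        apply (toP F0 False (fun _ => True) u0); auto.
        intros w _. split; [|tauto]. intros [z Hz]. apply Hno; eauto. }
    destruct HP as [r HP].
    assert (HPL : Fr L (Pframe r)) by (intros phi Hphi; apply HP, HF0, Hphi).
    destruct (world_inh F0) as [u0].
    exists (Sframe F0 r), (Pframe r), (fun _ => inr tt).
    split; [|split; [|split; [|split; [|split]]]].
    + intros phi Hphi V [x|[]].
      * set (G := F0).
        apply (pm F0 (Sframe F0 r) inl) with (VG := fun n a => V n (inl a)).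
        -- simpl; auto.
        -- intros a [v|v] Hv; simpl in Hv; [eauto|contradiction].
        -- tauto.
        -- apply HF0; auto.
      * apply (pm (Pframe r) (Sframe F0 r) inr) with (VG := fun n a => V n (inr a)).
        -- simpl; auto.
        -- intros a [v|[]] Hv; simpl in Hv; [contradiction|]. exists tt; auto.
        -- tauto.
        -- apply HPL; auto.
    + exact HPL.
    + exists inl. split; [|split].
      * intros a b H. injection H; auto.
      * intro t. rewrite redA. split.
        -- destruct t as [x|[]].
           ++ eauto.
           ++ intros [H _]. exfalso; auto.
        -- intros [a <-]. split; [discriminate|]. split; [simpl; auto|].
           intros [[z|z] [H1 H2]]; simpl in *; auto.
      * simpl. tauto.
    + intro e. simpl. exists (inl u0). exists (inr tt). unfold env_upd. simpl.
      discriminate.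
    + intro H. specialize (H (fun _ => tt)). simpl in H.
      destruct H as [[] [[] H]]. unfold env_upd in H; simpl in H. auto.
    + intros phi Hv VP [].
      apply (pm (Pframe r) (Sframe F0 r) inr) with
        (VF := fun n w => match w with inr _ => VP n tt | inl _ => False end).
      * simpl; auto.
      * intros a [v|[]] Hv'; simpl in Hv'; [contradiction|]. exists tt; auto.
      * intros n []. tauto.
      * apply Hv.
Qed.
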